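(* $\lim_{j\to\infty}p_j^*=\lim_{j\to\infty}u_j^*=1$ and $\lim_{j\to\infty}\lambda_j^*=0$, where $\lambda_j^*=1-u_j^*$.
   Context: $\Phi$ is the partial map of $\mathbb{R}^2$ defined for $p\ne0$ by $\Phi(p,u)=\bigl(p^2(u+1)-1,\ 1/p\bigr)$. For $n\ge1$, the trajectory $T_n$ is the (existing and unique) finite sequence $(p_{j,n},u_{j,n})$, $j=0,\dots,n$, with $(p_{j,n},u_{j,n})=\Phi(p_{j-1,n},u_{j-1,n})$ for $1\le j\le n$, $u_{0,n}=0$, $p_{n,n}=0$, and $p_{j,n}>0$ for $0\le j\le n-1$. For each $j\ge0$ the limit $p_j^*=\lim_{n\to\infty}p_{j,n}$ exists, and $u_j^*=\lim_{n\to\infty}u_{j,n}=1/p_{j-1}^*$ for $j\ge1$. *)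

(* Defs.v *)
From Stdlib Require Import Reals.
Open Scope R_scope.

(* The partial map Phi(p,u) = (p^2 (u+1) - 1, 1/p), meaningful for p <> 0. *)
Definition Phi (x : R * R) : R * R :=
  let (p, u) := x in (p ^ 2 * (u + 1) - 1, / p).

Definition is_trajectory (n : nat) (P U : nat -> R) : Prop :=
  (forall j : nat, (1 <= j <= n)%nat -> (P j, U j) = Phi (P (j - 1)%nat, U (j - 1)%nat)) /\
  U 0%nat = 0 /\
  P n = 0 /\
  (forall j : nat, (j <= n - 1)%nat -> 0 < P j).

(* Main.v *)
Require Import Defs.
From Stdlib Require Import Reals.
From Stdlib Require Import Lra Lia Psatz.
Open Scope R_scope.

Lemma cv_const (c : R) : Un_cv (fun _ => c) c.
Proof. intros e He; exists 0%nat; intros; unfold R_dist; replace (c - c) with 0 by ring; rewrite Rabs_R0; lra. Qed.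

Lemma lim_eq_ev (a b : nat -> R) la lb (N : nat) :
  Un_cv a la -> Un_cv b lb -> (forall n, (N <= n)%nat -> a n = b n) -> la = lb.
Proof.
  intros Ha Hb He. apply (UL_sequence a); auto.
  intros e Hep. destruct (Hb e Hep) as [N1 HN1]. exists (Nat.max N N1).
  intros n Hn. rewrite He by lia. apply HN1. lia.
Qed.

Lemma lim_le_ev (a b : nat -> R) la lb (N : nat) :
  Un_cv a la -> Un_cv b lb -> (forall n, (N <= n)%nat -> a n <= b n) -> la <= lb.
Proof.
  intros Ha Hb He. destruct (Rle_dec la lb) as [|Hn]; auto. exfalso.
  assert (Hep : 0 < (la - lb)/2) by lra.
  destruct (Ha _ Hep) as [N1 HN1]. destruct (Hb _ Hep) as [N2 HN2].
  set (n := Nat.max N (Nat.max N1 N2)).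
  specialize (HN1 n ltac:(unfold n; lia)). specialize (HN2 n ltac:(unfold n; lia)).
  specialize (He n ltac:(unfold n; lia)).
  apply Rabs_def2 in HN1. apply Rabs_def2 in HN2. lra.
Qed.

Section Traj.
Variables (n : nat) (P U : nat -> R).
Hypothesis H : is_trajectory n P U.

Lemma tstep j : (j + 1 <= n)%nat -> P (j+1)%nat = P j ^ 2 * (U j + 1) - 1 /\ U (j+1)%nat = / P j.
Proof.
  intros Hj. destruct H as [Hs _]. specialize (Hs (j+1)%nat ltac:(lia)).
  replace (j + 1 - 1)%nat with j in Hs by lia. simpl in Hs. injection Hs; auto.
Qed.

Lemma tpos j : (j + 1 <= n)%nat -> 0 < P j.
Proof. intros; destruct H as (_&_&_&Hp); apply Hp; lia. Qed.

Lemma lemB j : (j + 1 <= n)%nat -> P j <= 1 -> P j < P (j+1)%nat -> False.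
Proof.
  induction j as [|j IH]; intros Hj H1 H2.
  - destruct (tstep 0 Hj) as [E _]. destruct H as (_&HU&_). rewrite HU in E.
    pose proof (tpos 0 Hj). simpl in *. nra.
  - apply IH; [lia| |].
    + destruct (Rle_dec (P j) 1); auto. exfalso.
      destruct (tstep (S j) Hj) as [E _]. destruct (tstep j ltac:(lia)) as [_ E2].
      replace (j+1)%nat with (S j) in E2 by lia. rewrite E2 in E.
      pose proof (tpos j ltac:(lia)). pose proof (tpos (S j) Hj).
      assert (Hv : P j * / P j = 1) by (field; lra).
      assert (0 < / P j) by (apply Rinv_0_lt_compat; lra).
      assert (P (S j) * / P j <= 1) by nra. simpl in *. nra.
    + destruct (Rlt_dec (P j) (P (j+1)%nat)); auto. exfalso.
      destruct (tstep (S j) Hj) as [E _]. destruct (tstep j ltac:(lia)) as [_ E2].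
      replace (j+1)%nat with (S j) in *by lia. rewrite E2 in E.
      pose proof (tpos j ltac:(lia)). pose proof (tpos (S j) Hj).
      assert (Hv : P j * / P j = 1) by (field; lra).
      assert (0 < / P j) by (apply Rinv_0_lt_compat; lra).
      assert (P (S j) * / P j <= 1) by nra. simpl in *. nra.
Qed.

Lemma lemF d : forall k, (k + 1 + d = n)%nat -> 1 <= P (k+1)%nat -> P k < P (k+1)%nat -> False.
Proof.
  induction d as [|d IH]; intros k Hk H1 H2.
  - replace (k+1)%nat with n in H1 by lia. destruct H as (_&_&Hn&_). lra.
  - destruct (tstep (k+1) ltac:(lia)) as [E _]. destruct (tstep k ltac:(lia)) as [_ E2].
    rewrite E2 in E. pose proof (tpos k ltac:(lia)).
    assert (Hv : P k * / P k = 1) by (field; lra).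
    assert (0 < / P k) by (apply Rinv_0_lt_compat; lra).
    assert (P (k+1)%nat * / P k > 1) by nra.
    replace (k+1+1)%nat with ((k+1)+1)%nat in E by lia.
    apply (IH (k+1)%nat); [lia | simpl in *; nra | simpl in *; nra].
Qed.

Lemma tmono j : (j + 1 <= n)%nat -> P (j+1)%nat <= P j.
Proof.
  intros Hj. destruct (Rle_dec (P (j+1)%nat) (P j)) as [|Hn]; auto. exfalso.
  destruct (Rle_dec (P j) 1).
  - apply (lemB j); auto; lra.
  - apply (lemF (n - j - 1) j); [lia|lra|lra].
Qed.

End Traj.

Section Limit.
Variables (x y : nat -> R).
Hypothesis Hx0 : forall j, 0 <= x j.
Hypothesis Hmono : forall j, x (S j) <= x j.
Hypothesis Hyx : forall j, y (S j) * x j = 1.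
Hypothesis Hrec : forall j, x (S j) = x j ^ 2 * (y j + 1) - 1.
Hypothesis Hy0 : y 0%nat = 0.

Lemma xpos j : 0 < x j.
Proof. destruct (Hx0 j) as [|E]; auto. pose proof (Hyx j). rewrite <- E in H. lra. Qed.

Lemma ypos j : 0 < y (S j).
Proof. pose proof (Hyx j). pose proof (xpos j). nra. Qed.

Lemma yx_le m : y m * x m <= 1.
Proof.
  destruct m. rewrite Hy0; lra.
  pose proof (Hyx m). pose proof (Hmono m). pose proof (ypos m). nra.
Qed.

Lemma mono_le i k : x (k + i)%nat <= x k.
Proof.
  induction i. rewrite Nat.add_0_r; lra.
  replace (k + S i)%nat with (S (k+i)) by lia. pose proof (Hmono (k+i)). lra.
Qed.

Lemma x_ge1 k : 1 <= x k.
Proof.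
  destruct (Rle_dec 1 (x k)) as [|Hn]; auto. exfalso.
  pose proof (xpos k). set (d := 1 - x k ^ 2).
  assert (Hd : 0 < d) by (unfold d; nra).
  assert (Hi : forall i, x (k + i)%nat <= x k - INR i * d).
  { induction i. rewrite Nat.add_0_r; simpl; lra.
    replace (k + S i)%nat with (S (k+i)) by lia. rewrite Hrec, S_INR.
    pose proof (yx_le (k+i)). pose proof (mono_le i k). pose proof (Hx0 (k+i)).
    pose proof (xpos (k+i)).
    assert (x (k+i)%nat ^2 <= x k ^ 2) by nra.
    assert (x (k + i)%nat ^ 2 * y (k + i)%nat <= x (k+i)%nat) by nra.
    unfold d in *. nra. }
  destruct (INR_unbounded (x k / d)) as [i Hi2].
  specialize (Hi i). pose proof (Hx0 (k+i)).
  assert (INR i * d > x k).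
  { apply (Rmult_gt_compat_r d) in Hi2; auto. unfold Rdiv in Hi2.
    rewrite Rmult_assoc, Rinv_l in Hi2; lra. }
  lra.
Qed.

Lemma second_diff j : x (S (S j)) - 2 * x (S j) + x j >= x (S j) ^ 2 - 1.
Proof.
  rewrite (Hrec (S j)). pose proof (Hyx j). pose proof (ypos j).
  assert (x (S j) ^ 2 * y (S j) - 2 * x (S j) + x j = (x (S j) - x j)^2 * y (S j)).
  { assert (E : (x (S j) - x j)^2 * y (S j) = x (S j) ^ 2 * y (S j) - 2 * x (S j) * (y (S j) * x j) + x j * (y (S j) * x j)) by ring.
    rewrite H in E. lra. }
  assert (0 <= (x (S j) - x j)^2 * y (S j)) by (apply Rmult_le_pos; [apply pow2_ge_0|lra]).
  lra.
Qed.

Lemma telesc N : forall c, (forall j, (1 <= j <= N)%nat -> c <= x j ^ 2 - 1) ->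
  x 1%nat - x 0%nat + INR N * c <= x (S N) - x N.
Proof.
  induction N as [|N IH]; intros c Hc. simpl; lra.
  rewrite S_INR. specialize (IH c ltac:(intros; apply Hc; lia)).
  pose proof (second_diff N). specialize (Hc (S N) ltac:(lia)). lra.
Qed.

Lemma x_upper N : (1 <= N)%nat -> INR N * (x N - 1) <= x 0%nat - x 1%nat.
Proof.
  intros HN. pose proof (x_ge1 N).
  pose proof (telesc N (x N ^ 2 - 1)) as T.
  assert (forall j, (1 <= j <= N)%nat -> x N ^ 2 - 1 <= x j ^ 2 - 1).
  { intros j Hj. pose proof (mono_le (N - j) j). replace (j + (N - j))%nat with N in H0 by lia.
    assert (x N * x N <= x j * x j) by (apply Rmult_le_compat; lra). simpl; lra. }
  specialize (T H0). pose proof (Hmono N). pose proof (pos_INR N).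
  assert (x N * 1 <= x N * x N) by (apply Rmult_le_compat_l; lra).
  assert (INR N * (x N - 1) <= INR N * (x N ^ 2 - 1)) by (apply Rmult_le_compat_l; [lra|simpl; lra]). lra.
Qed.

Lemma x_cv : Un_cv x 1.
Proof.
  intros e He. set (C := x 0%nat - x 1%nat).
  destruct (INR_unbounded (C / e)) as [N HN].
  exists (S N). intros m Hm. pose proof (x_ge1 m). pose proof (x_upper m ltac:(lia)).
  assert (INR N < INR m) by (apply lt_INR; lia). pose proof (pos_INR N).
  unfold R_dist. rewrite Rabs_right by lra.
  assert (C <= e * INR N).
  { apply (Rmult_gt_compat_r e) in HN; auto. unfold Rdiv in HN.
    rewrite Rmult_assoc, Rinv_l in HN; lra. }
  fold C in H0. nra.
Qed.

Lemma y_cv : Un_cv y 1.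
Proof.
  intros e He. destruct (x_cv e He) as [N HN]. exists (S N). intros m Hm.
  destruct m as [|m]; [lia|]. specialize (HN m ltac:(lia)). unfold R_dist in *.
  pose proof (x_ge1 m). pose proof (Hyx m). pose proof (ypos m).
  rewrite Rabs_right in HN by lra.
  assert (y (S m) * 1 <= y (S m) * x m) by (apply Rmult_le_compat_l; lra).
  rewrite Rabs_left1 by lra.
  assert (E : 1 - y (S m) = y (S m) * (x m - 1)) by (replace (y (S m) * (x m - 1)) with (y (S m) * x m - y (S m)) by ring; lra).
  assert (y (S m) * (x m - 1) <= 1 * (x m - 1)) by (apply Rmult_le_compat_r; lra).
  lra.
Qed.

End Limit.

Theorem mainTheorem11 (p u : nat -> nat -> R) (pstar ustar : nat -> R) :
  (forall n : nat, (1 <= n)%nat -> is_trajectory n (fun j => p j n) (fun j => u j n)) ->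
  (forall j : nat, Un_cv (fun n => p j n) (pstar j)) ->
  (forall j : nat, Un_cv (fun n => u j n) (ustar j)) ->
  Un_cv pstar 1 /\ Un_cv ustar 1 /\ Un_cv (fun j => 1 - ustar j) 0.
Proof.
  intros HT Hp Hu.
  assert (Hx0 : forall j, 0 <= pstar j).
  { intros j. apply (lim_le_ev (fun _ => 0) (fun n => p j n) 0 (pstar j) (S j)); auto.
    apply cv_const. intros n Hn. left. apply (tpos n (fun j => p j n) (fun j => u j n) (HT n ltac:(lia))); lia. }
  assert (Hmono : forall j, pstar (S j) <= pstar j).
  { intros j. apply (lim_le_ev (fun n => p (S j) n) (fun n => p j n) _ _ (S (S j))); auto.
    intros n Hn. replace (S j) with (j+1)%nat by lia.
    apply (tmono n (fun j => p j n) (fun j => u j n) (HT n ltac:(lia))); lia. }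
  assert (Hyx : forall j, ustar (S j) * pstar j = 1).
  { intros j. apply (lim_eq_ev (fun n => u (S j) n * p j n) (fun _ => 1) _ _ (S (S j))).
    apply CV_mult; auto. apply cv_const.
    intros n Hn. destruct (tstep n (fun j => p j n) (fun j => u j n) (HT n ltac:(lia)) j ltac:(lia)) as [_ E].
    pose proof (tpos n (fun j => p j n) (fun j => u j n) (HT n ltac:(lia)) j ltac:(lia)).
    simpl in *. replace (j+1)%nat with (S j) in E by lia. rewrite E. field; lra. }
  assert (Hrec : forall j, pstar (S j) = pstar j ^ 2 * (ustar j + 1) - 1).
  { intros j.
    assert (L : Un_cv (fun n => p j n * p j n * (u j n + 1) - 1) (pstar j * pstar j * (ustar j + 1) - 1)).
    { apply CV_minus; [|apply cv_const]. apply CV_mult; [apply CV_mult; auto|].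
      apply CV_plus; auto. apply cv_const. }
    replace (pstar j ^ 2 * (ustar j + 1) - 1) with (pstar j * pstar j * (ustar j + 1) - 1) by ring.
    apply (lim_eq_ev (fun n => p (S j) n) _ _ _ (S (S j)) (Hp (S j)) L).
    intros n Hn. destruct (tstep n (fun j => p j n) (fun j => u j n) (HT n ltac:(lia)) j ltac:(lia)) as [E _].
    simpl in *. replace (j+1)%nat with (S j) in E by lia. rewrite E. ring. }
  assert (Hy0 : ustar 0%nat = 0).
  { apply (lim_eq_ev (fun n => u 0%nat n) (fun _ => 0) _ _ 1%nat); auto. apply cv_const.
    intros n Hn. destruct (HT n Hn) as (_&E&_). exact E. }
  split; [|split].
  - apply (x_cv pstar ustar); auto.
  - apply (y_cv pstar ustar); auto.
  - intros e He. destruct (y_cv pstar ustar Hx0 Hmono Hyx Hrec Hy0 e He) as [N HN].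
    exists N. intros m Hm. specialize (HN m Hm). unfold R_dist in *.
    replace (1 - ustar m - 0) with (- (ustar m - 1)) by ring. rewrite Rabs_Ropp. auto.
Qed.
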